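(* Let $d\ge2$, $w>0$ and $v\ge0$. For unit vectors $\boldsymbol{u}_1,\dots,\boldsymbol{u}_d\in\mathbb{R}^d$ (random vectors $\boldsymbol{w}_i=w\boldsymbol{u}_i$ all having the same length $w$) define $$\rho(\boldsymbol{u}_1,\dots,\boldsymbol{u}_d)=\frac{\Gamma(\frac d2)}{d(d-1)}\sum_{i=1}^d\sum_{j\ne i}\sum_{k=0}^\infty\frac{v^{2k}w^{2k}\|\boldsymbol{u}_i+\boldsymbol{u}_j\|_2^{2k}}{2^{2k}k!\,\Gamma(k+\frac d2)}.$$ Then $\rho$ (and its expectation, if the directions $\boldsymbol{u}_i$ are chosen randomly) is minimised when the ensemble has simplex geometry, i.e. when $\boldsymbol{u}_i^\top\boldsymbol{u}_j=-\frac{1}{d-1}$ for all $i\ne j$ (equivalently, all pairs subtend equal angles and $\sum_i\boldsymbol{u}_i=0$).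
   Context: This is the RF-conformity $\rho(\boldsymbol{x},\boldsymbol{y})$ of an ensemble of $d$ random vectors of common norm $w$, where $v=\|\boldsymbol{x}+\boldsymbol{y}\|_2$. *)

(* Defs.v *)
From Stdlib Require Import Reals List Arith.
From Coquelicot Require Import Coquelicot.
Import ListNotations.
Open Scope R_scope.

Definition Gamma (x : R) : R :=
  RInt_gen (fun t => Rpower t (x - 1) * exp (- t)) (at_right 0) (Rbar_locally p_infty).

Definition fsum (n : nat) (f : nat -> R) : R :=
  fold_right Rplus 0 (map f (seq 0 n)).

(* Vectors of R^d are represented by functions nat -> R; only coordinates 0..d-1 matter. *)
Definition dot (d : nat) (x y : nat -> R) : R := fsum d (fun k => x k * y k).
Definition norm2 (d : nat) (x : nat -> R) : R := sqrt (dot d x x).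
Definition vadd (x y : nat -> R) : nat -> R := fun k => x k + y k.

(* An ensemble of d directions u_0, ..., u_{d-1} in R^d: u i is the i-th vector. *)
Definition unit_ensemble (d : nat) (u : nat -> nat -> R) : Prop :=
  forall i, (i < d)%nat -> norm2 d (u i) = 1.

Definition simplex_ensemble (d : nat) (u : nat -> nat -> R) : Prop :=
  unit_ensemble d u /\
  forall i j, (i < d)%nat -> (j < d)%nat -> i <> j ->
    dot d (u i) (u j) = - 1 / (INR d - 1).

Definition rho_term (d : nat) (w v : R) (x : nat -> R) (k : nat) : R :=
  v ^ (2 * k) * w ^ (2 * k) * (norm2 d x) ^ (2 * k)
  / (2 ^ (2 * k) * INR (fact k) * Gamma (INR k + INR d / 2)).

Definition rho (d : nat) (w v : R) (u : nat -> nat -> R) : R :=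
  Gamma (INR d / 2) / (INR d * (INR d - 1)) *
  fsum d (fun i => fsum d (fun j =>
    if Nat.eqb i j then 0 else Series (rho_term d w v (vadd (u i) (u j))))).

(* Main.v *)
Require Import Defs.
From Stdlib Require Import Reals Lra Lia List Arith Classical_Prop.
From Coquelicot Require Import Coquelicot.
Open Scope R_scope.

Lemma improper_exists (f : R -> R) (M : R) :
  (forall a b, 0 < a <= b -> ex_RInt f a b) ->
  (forall x, 0 < x -> 0 <= f x) ->
  (forall a b, 0 < a <= b -> RInt f a b <= M) ->
  exists I, is_RInt_gen f (at_right 0) (Rbar_locally p_infty) I /\
    (forall a b, 0 < a <= b -> RInt f a b <= I).
Proof.
  intros Hex Hpos Hb.
  set (E := fun y => exists a b, 0 < a <= b /\ y = RInt f a b).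
  assert (HbE : bound E).
  { exists M. intros y [a [b [Hab ->]]]. now apply Hb. }
  assert (HnE : exists y, E y).
  { exists (RInt f 1 1). exists 1, 1. split; [lra|reflexivity]. }
  destruct (completeness E HbE HnE) as [I [HI1 HI2]].
  assert (Hup : forall a b, 0 < a <= b -> RInt f a b <= I).
  { intros a b Hab. apply HI1. exists a, b. split; [exact Hab|reflexivity]. }
  exists I. split; [|exact Hup].
  intros P [eps Heps]. unfold filtermapi.
  assert (Hx : exists a0 b0, 0 < a0 <= b0 /\ I - eps < RInt f a0 b0).
  { apply Classical_Prop.NNPP. intro Hn.
    assert (I <= I - eps).
    { apply HI2. intros y [a [b [Hab ->]]].
      apply Rnot_lt_le. intro Hl. apply Hn. exists a, b. split; assumption. }
    destruct eps; simpl in *; lra. }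
  destruct Hx as [a0 [b0 [Hab0 Hlt]]].
  apply (Filter_prod _ _ _ (fun a => 0 < a < a0) (fun b => b0 < b)).
  - exists (mkposreal a0 (proj1 Hab0)). intros y Hy Hy0.
    unfold ball in Hy; simpl in Hy; unfold AbsRing_ball, abs, minus, plus, opp in Hy; simpl in Hy.
    rewrite Ropp_0, Rplus_0_r in Hy. apply Rabs_def2 in Hy. lra.
  - exists b0. auto.
  - intros a b Ha Hb'. simpl. exists (RInt f a b). split.
    + apply (RInt_correct f a b), Hex. lra.
    + apply Heps. 
      assert (E1 : RInt f a b = RInt f a a0 + RInt f a0 b0 + RInt f b0 b).
      { rewrite <- (RInt_Chasles f a a0 b) by (apply Hex; lra).
        rewrite <- (RInt_Chasles f a0 b0 b) by (apply Hex; lra).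
        unfold plus; simpl; ring. }
      assert (0 <= RInt f a a0).
      { apply RInt_ge_0; [lra| apply Hex; lra| intros; apply Hpos; lra]. }
      assert (0 <= RInt f b0 b).
      { apply RInt_ge_0; [lra| apply Hex; lra| intros; apply Hpos; lra]. }
      assert (RInt f a b <= I) by (apply Hup; lra).
      unfold ball; simpl; unfold AbsRing_ball, abs, minus, plus, opp; simpl.
      apply Rabs_def1; destruct eps; simpl in *; lra.
Qed.

Lemma ln_le_sub1 z : 0 < z -> ln z <= z - 1.
Proof. intros Hz. pose proof (exp_ineq1_le (ln z)). rewrite exp_ln in H by exact Hz. lra. Qed.

Lemma Rpower_bound t y : 0 < t -> 0 <= y ->
  Rpower t y * exp (- t) <= exp (y * ln (2*y+1)) * exp (- t / 2).
Proof.
  intros Ht Hy. unfold Rpower. rewrite <- !exp_plus.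
  set (c := 2*y+1).
  assert (Hc : 0 < c) by (unfold c; lra).
  assert (Hln : ln t = ln (t / c) + ln c).
  { rewrite <- ln_mult. f_equal. field. lra. apply Rdiv_lt_0_compat; lra. lra. }
  assert (H1 : ln (t / c) <= t / c - 1) by (apply ln_le_sub1; apply Rdiv_lt_0_compat; lra).
  assert (H2 : y * ln (t / c) <= y * (t/c - 1)) by (apply Rmult_le_compat_l; lra).
  assert (H3 : y * (t / c) <= t / 2).
  { assert (E : t / 2 - y * (t / c) = t / (2 * c)) by (unfold c; field; lra).
    assert (0 < t / (2 * c)) by (apply Rdiv_lt_0_compat; lra). lra. }
  assert (y * ln t + - t <= y * ln c + - t / 2).
  { rewrite Hln. nra. }
  destruct (Rle_lt_or_eq_dec _ _ H) as [Hl|He].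
  - left. now apply exp_increasing.
  - rewrite He; lra.
Qed.

Definition gf (x : R) (t : R) := Rpower t (x - 1) * exp (- t).

Lemma gf_cont x z : 0 < z -> continuous (gf x) z.
Proof.
  intros Hz. apply (ex_derive_continuous (gf x)). unfold gf.
  apply ex_derive_mult.
  - exists ((x-1) * Rpower z (x - 1 - 1)). apply is_derive_Reals. now apply derivable_pt_lim_power.
  - auto_derive. auto.
Qed.

Lemma gf_ex x a b : 0 < a <= b -> ex_RInt (gf x) a b.
Proof.
  intros Hab. apply (ex_RInt_continuous (V:=R_CompleteNormedModule)). intros z Hz.
  apply gf_cont. rewrite Rmin_left in Hz by lra. lra.
Qed.

Lemma Gamma_exists x : 1 <= x ->
  exists I, is_RInt_gen (gf x) (at_right 0) (Rbar_locally p_infty) I /\ exp (-2) <= I.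
Proof.
  intros Hx.
  set (C := exp ((x-1) * ln (2*(x-1)+1))).
  assert (HC : 0 < C) by apply exp_pos.
  destruct (improper_exists (gf x) (2 * C)) as [I [HI Hup]].
  - apply gf_ex.
  - intros t Ht. unfold gf. apply Rmult_le_pos; [unfold Rpower|]; left; apply exp_pos.
  - intros a b Hab.
    set (F := fun t => -2 * C * exp (- t / 2)).
    set (g := fun t => C * exp (- t / 2)).
    assert (Hg : is_RInt g a b (minus (F b) (F a))).
    { apply (is_RInt_derive (V:=R_CompleteNormedModule)).
      - intros t _. unfold F, g. auto_derive. auto. unfold Rdiv. set (E := exp _). field.
      - intros t _. apply (ex_derive_continuous g). unfold g. auto_derive. auto. }
    apply Rle_trans with (RInt g a b).
    + apply RInt_le. lra. apply gf_ex; lra. eexists; exact Hg.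
      intros t Ht. unfold gf, g. apply Rpower_bound; lra.
    + rewrite (is_RInt_unique _ _ _ _ Hg). unfold F, minus, plus, opp; simpl.
      pose proof (exp_pos (- a / 2)). pose proof (exp_pos (- b / 2)).
      assert (exp (- a / 2) < 1) by (rewrite <- exp_0; apply exp_increasing; lra).
      nra.
  - exists I. split; [exact HI|].
    apply Rle_trans with (RInt (gf x) 1 2); [|apply Hup; lra].
    apply Rle_trans with (RInt (fun _ => exp (-2)) 1 2).
    + rewrite RInt_const. unfold scal; simpl; unfold mult; simpl. lra.
    + apply RInt_le. lra. apply ex_RInt_const. apply gf_ex; lra.
      intros t Ht. unfold gf.
      assert (1 <= Rpower t (x-1)).
      { unfold Rpower.
        assert (0 <= (x-1) * ln t).
        { apply Rmult_le_pos. lra. rewrite <- ln_1. left. apply ln_increasing; lra. }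
        destruct (Rle_lt_or_eq_dec _ _ H) as [Hl|He].
        - pose proof (exp_increasing 0 _ Hl) as H0; rewrite exp_0 in H0; lra.
        - rewrite <- He, exp_0; lra. }
      assert (exp (-2) <= exp (-t)).
      { left; apply exp_increasing; lra. }
      pose proof (exp_pos (-2)). nra.
Qed.

Lemma Gamma_lb x : 1 <= x -> exp (-2) <= Gamma x.
Proof.
  intros Hx. destruct (Gamma_exists x Hx) as [I [HI Hl]].
  unfold Gamma. replace (RInt_gen _ _ _) with I. exact Hl.
  symmetry. apply (is_RInt_gen_unique (gf x)). exact HI.
Qed.

Lemma fold_plus_acc a l : fold_right Rplus a l = a + fold_right Rplus 0 l.
Proof. induction l; simpl. ring. rewrite IHl. ring. Qed.

Lemma fsum_0 f : fsum 0 f = 0.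
Proof. reflexivity. Qed.

Lemma fsum_S n f : fsum (S n) f = fsum n f + f n.
Proof.
  unfold fsum. rewrite seq_S, map_app, fold_right_app. simpl.
  rewrite fold_plus_acc. ring.
Qed.

Lemma fsum_ext n f g : (forall k, (k < n)%nat -> f k = g k) -> fsum n f = fsum n g.
Proof.
  induction n; intros H. reflexivity.
  rewrite !fsum_S, IHn, H; auto.
Qed.

Lemma fsum_plus n f g : fsum n (fun k => f k + g k) = fsum n f + fsum n g.
Proof. induction n. simpl; unfold fsum; simpl; ring. rewrite !fsum_S, IHn. ring. Qed.

Lemma fsum_scal n c f : fsum n (fun k => c * f k) = c * fsum n f.
Proof. induction n. unfold fsum; simpl; ring. rewrite !fsum_S, IHn. ring. Qed.

Lemma fsum_const n c : fsum n (fun _ => c) = INR n * c.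
Proof. induction n. unfold fsum; simpl; ring. rewrite !fsum_S, IHn, S_INR. ring. Qed.

Lemma fsum_le n f g : (forall k, (k < n)%nat -> f k <= g k) -> fsum n f <= fsum n g.
Proof.
  induction n; intros H. unfold fsum; simpl; lra.
  rewrite !fsum_S. apply Rplus_le_compat; auto.
Qed.

Lemma fsum_comm n m f : fsum n (fun i => fsum m (fun j => f i j)) = fsum m (fun j => fsum n (fun i => f i j)).
Proof.
  induction n. unfold fsum at 1; simpl. rewrite <- (fsum_ext m (fun _ => 0)).
  rewrite fsum_const; ring. intros; reflexivity.
  rewrite fsum_S, IHn, <- fsum_plus. apply fsum_ext. intros. rewrite fsum_S. reflexivity.
Qed.

Definition e (i j : nat) : R := if Nat.eqb i j then 0 else 1.
Definition dl (i j : nat) : R := if Nat.eqb i j then 1 else 0.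

Lemma fsum_e n i h : (i < n)%nat -> fsum n (fun j => e i j * h j) = fsum n h - h i.
Proof.
  induction n; intros Hi. lia.
  rewrite !fsum_S. destruct (Nat.eq_dec i n) as [->|Hne].
  - rewrite (fsum_ext n _ h). unfold e; rewrite Nat.eqb_refl. ring.
    intros k Hk. unfold e. destruct (Nat.eqb_spec n k). lia. ring.
  - rewrite IHn by lia. unfold e. destruct (Nat.eqb_spec i n). lia. ring.
Qed.

Lemma fsum_dl n i h : (i < n)%nat -> fsum n (fun j => dl i j * h j) = h i.
Proof.
  intros Hi. rewrite (fsum_ext n _ (fun j => h j + -1 * (e i j * h j))).
  2: intros; unfold dl, e; destruct (Nat.eqb i k); ring.
  rewrite fsum_plus, fsum_scal, fsum_e by exact Hi. ring.
Qed.

Definition sx (d : nat) (i k : nat) : R := (dl i k - / INR d) * sqrt (INR d / (INR d - 1)).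

Lemma dot_sx d i j : (2 <= d)%nat -> (i < d)%nat -> (j < d)%nat ->
  dot d (sx d i) (sx d j) = INR d / (INR d - 1) * (dl j i - / INR d).
Proof.
  intros Hd Hi Hj.
  assert (HD : 2 <= INR d) by (replace 2 with (INR 2) by (simpl; ring); apply le_INR; lia).
  set (q := INR d / (INR d - 1)). set (c := / INR d).
  assert (Hq : sqrt q * sqrt q = q).
  { apply sqrt_sqrt. unfold q. apply Rlt_le, Rdiv_lt_0_compat; lra. }
  unfold dot, sx. fold q c.
  rewrite (fsum_ext d _ (fun k => (dl i k * (q * dl j k - q * c) + (- q * c) * (dl j k * 1)) + q * c * c)).
  2: { intros k _. replace ((dl i k - c) * sqrt q * ((dl j k - c) * sqrt q)) with ((dl i k - c)*(dl j k - c)*(sqrt q * sqrt q)) by ring. rewrite Hq. ring. }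
  rewrite !fsum_plus, fsum_dl by exact Hi. rewrite fsum_scal, fsum_dl by exact Hj.
  rewrite fsum_const. unfold c. field. lra.
Qed.

Lemma simplex_exists d : (2 <= d)%nat -> exists s, simplex_ensemble d s.
Proof.
  intros Hd. exists (sx d).
  assert (HD : 2 <= INR d) by (replace 2 with (INR 2) by (simpl; ring); apply le_INR; lia).
  split.
  - intros i Hi. unfold norm2. rewrite dot_sx by assumption.
    unfold dl. rewrite Nat.eqb_refl. replace (INR d / (INR d - 1) * (1 - / INR d)) with 1 by (field; lra). apply sqrt_1.
  - intros i j Hi Hj Hij. rewrite dot_sx by assumption.
    unfold dl. destruct (Nat.eqb_spec j i). lia. field. lra.
Qed.

Lemma tangent_S p t t0 : 0 <= t -> 0 <= t0 ->
  t0 ^ (S p) + INR (S p) * t0 ^ p * (t - t0) <= t ^ (S p).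
Proof.
  intros Ht Ht0. induction p.
  - simpl. lra.
  - set (a := t0 ^ p). assert (Ha : 0 <= a) by (apply pow_le; lra).
    change (t0 ^ S (S p)) with (t0 * (t0 * a)). change (t0 ^ S p) with (t0 * a) in *.
    change (t ^ S (S p)) with (t * t ^ (S p)).
    rewrite !S_INR. rewrite S_INR in IHp. fold a in IHp.
    assert (Hp : 0 <= INR p) by apply pos_INR.
    assert (H1 : t * (t0 * a + (INR p + 1) * a * (t - t0)) <= t * t ^ S p)
      by (apply Rmult_le_compat_l; lra).
    assert (H2 : 0 <= a * (INR p + 1) * ((t - t0) * (t - t0))).
    { apply Rmult_le_pos. apply Rmult_le_pos; lra. pose proof (Rle_0_sqr (t - t0)) as Hs; unfold Rsqr in Hs; lra. }
    assert (E : t0 * (t0 * a) + (INR p + 1 + 1) * (t0 * a) * (t - t0) =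
       t * (t0 * a + (INR p + 1) * a * (t - t0)) - a * (INR p + 1) * ((t - t0) * (t - t0))) by ring.
    rewrite E. lra.
Qed.

Lemma tangent k t t0 : 0 <= t -> 0 <= t0 ->
  t0 ^ k + INR k * t0 ^ (pred k) * (t - t0) <= t ^ k.
Proof.
  intros. destruct k. simpl; lra. apply tangent_S; auto.
Qed.

Lemma dot_nonneg d x : 0 <= dot d x x.
Proof.
  unfold dot. rewrite <- (Rmult_0_r (INR d)), <- fsum_const.
  apply fsum_le. intros. nra.
Qed.

Definition cc (d : nat) (w v : R) (k : nat) : R :=
  v ^ (2 * k) * w ^ (2 * k) / (2 ^ (2 * k) * INR (fact k) * Gamma (INR k + INR d / 2)).

Lemma rho_term_eq d w v x k : rho_term d w v x k = cc d w v k * (dot d x x) ^ k.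
Proof.
  unfold rho_term, cc, norm2. rewrite (pow_mult (sqrt _) 2 k), pow2_sqrt by apply dot_nonneg.
  unfold Rdiv; ring.
Qed.

Lemma Gamma_pos d k : (2 <= d)%nat -> 0 < Gamma (INR k + INR d / 2).
Proof.
  intros Hd.
  assert (HD : 2 <= INR d) by (replace 2 with (INR 2) by (simpl; ring); apply le_INR; lia).
  pose proof (pos_INR k).
  apply Rlt_le_trans with (exp (-2)). apply exp_pos. apply Gamma_lb. lra.
Qed.

Lemma cc_nonneg d w v k : (2 <= d)%nat -> 0 <= cc d w v k.
Proof.
  intros Hd. unfold cc. rewrite !pow_mult.
  apply Rmult_le_pos. apply Rmult_le_pos; apply pow_le; nra.
  apply Rlt_le, Rinv_0_lt_compat. apply Rmult_lt_0_compat. apply Rmult_lt_0_compat.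
  apply pow_lt; nra. apply lt_0_INR, lt_O_fact. now apply Gamma_pos.
Qed.

Lemma ex_series_exp z : ex_series (fun k => z ^ k / INR (fact k)).
Proof.
  exists (exp z). pose proof (is_exp_Reals z) as H. unfold is_pseries in H.
  eapply is_series_ext; [|exact H].
  intros n. rewrite pow_n_pow. reflexivity.
Qed.

Lemma ex_series_cc d w v X : (2 <= d)%nat -> 0 <= X ->
  ex_series (fun k => cc d w v k * X ^ k).
Proof.
  intros Hd HX.
  set (z := v ^ 2 * w ^ 2 * X / 2 ^ 2).
  apply (ex_series_le (K := R_AbsRing) (V := R_CompleteNormedModule) _
           (fun k => exp 2 * (z ^ k / INR (fact k)))).
  - intros k. pose proof (Gamma_pos d k Hd) as HG.
    set (G := Gamma (INR k + INR d / 2)) in *.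
    assert (HF : 0 < INR (fact k)) by apply lt_0_INR, lt_O_fact.
    assert (Eq : cc d w v k * X ^ k = (z ^ k / INR (fact k)) * / G).
    { unfold cc, z. fold G. rewrite !pow_mult. unfold Rdiv.
      rewrite !Rpow_mult_distr, pow_inv. field. split; [lra|split; [lra|]].
      apply pow_nonzero. apply pow_nonzero. lra. }
    assert (Hz : 0 <= z ^ k / INR (fact k)).
    { apply Rmult_le_pos. apply pow_le. unfold z. apply Rmult_le_pos.
      apply Rmult_le_pos. apply Rmult_le_pos; apply pow2_ge_0. exact HX.
      apply Rlt_le, Rinv_0_lt_compat. nra. apply Rlt_le, Rinv_0_lt_compat; exact HF. }
    assert (HiG : / G <= exp 2).
    { replace (exp 2) with (/ exp (-2)).
      apply Rinv_le_contravar. apply exp_pos. apply Gamma_lb.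
      pose proof (pos_INR k).
      assert (HD : 2 <= INR d) by (replace 2 with (INR 2) by (simpl; ring); apply le_INR; lia).
      lra. rewrite <- (Rinv_inv (exp 2)). f_equal. replace (-2) with (-(2)) by ring. apply exp_Ropp. }
    change (norm (cc d w v k * X ^ k)) with (Rabs (cc d w v k * X ^ k)).
    rewrite Eq, Rabs_pos_eq.
    + rewrite Rmult_comm. apply Rmult_le_compat_r; assumption.
    + apply Rmult_le_pos. exact Hz. apply Rlt_le, Rinv_0_lt_compat, HG.
  - apply (ex_series_ext (fun k => scal (exp 2) (z ^ k / INR (fact k)))).
    intros; reflexivity.
    apply (ex_series_scal_l (K:=R_AbsRing) (V:=R_NormedModule)). apply ex_series_exp.
Qed.

Lemma ex_series_zero : ex_series (fun _ : nat => 0).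
Proof.
  apply (ex_series_ext (fun n => scal 0 (0 ^ n))). intros; unfold scal; simpl; unfold mult; simpl; ring.
  apply (ex_series_scal_l (K:=R_AbsRing) (V:=R_NormedModule)). apply ex_series_geom. rewrite Rabs_R0; lra.
Qed.

Lemma fsum_Series n (a : nat -> nat -> R) :
  (forall i, (i < n)%nat -> ex_series (a i)) ->
  ex_series (fun k => fsum n (fun i => a i k)) /\
  fsum n (fun i => Series (a i)) = Series (fun k => fsum n (fun i => a i k)).
Proof.
  induction n; intros H.
  - split. apply ex_series_zero.
    rewrite (Series_ext _ (fun k => 0 * 0)) by (intros; unfold fsum; simpl; ring).
    rewrite Series_scal_l. unfold fsum; simpl; ring.
  - destruct IHn as [IH1 IH2]. intros; apply H; lia.
    assert (Hn : ex_series (a n)) by (apply H; lia).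
    split.
    + apply (ex_series_ext (fun k => plus (fsum n (fun i => a i k)) (a n k))).
      intros; rewrite fsum_S; reflexivity.
      apply (ex_series_plus (K:=R_AbsRing) (V:=R_NormedModule)); assumption.
    + rewrite fsum_S, IH2.
      rewrite (Series_ext (fun k => fsum (S n) (fun i => a i k)) (fun k => fsum n (fun i => a i k) + a n k)) by (intros k; rewrite fsum_S; reflexivity).
      rewrite Series_plus; auto.
Qed.

Definition tt d (u : nat -> nat -> R) i j := dot d (vadd (u i) (u j)) (vadd (u i) (u j)).
Definition Qs d (u : nat -> nat -> R) k := fsum d (fun i => fsum d (fun j => e i j * tt d u i j ^ k)).

Lemma rho_repr d w v u : (2 <= d)%nat ->
  ex_series (fun k => cc d w v k * Qs d u k) /\
  rho d w v u = Gamma (INR d / 2) / (INR d * (INR d - 1)) * Series (fun k => cc d w v k * Qs d u k).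
Proof.
  intros Hd.
  set (a := fun i k => fsum d (fun j => e i j * (cc d w v k * tt d u i j ^ k))).
  assert (Hinner : forall i, ex_series (a i) /\
     fsum d (fun j => if Nat.eqb i j then 0 else Series (rho_term d w v (vadd (u i) (u j)))) = Series (a i)).
  { intros i.
    set (b := fun j k => e i j * (cc d w v k * tt d u i j ^ k)).
    destruct (fsum_Series d b) as [H1 H2].
    { intros j _. unfold b. apply (ex_series_scal_l (K:=R_AbsRing) (V:=R_NormedModule) (e i j) (fun k => cc d w v k * tt d u i j ^ k)).
      apply ex_series_cc. exact Hd. apply dot_nonneg. }
    split. exact H1.
    transitivity (fsum d (fun j => Series (b j))); [| exact H2]. apply fsum_ext. intros j _. unfold b.
    rewrite Series_scal_l. rewrite (Series_ext _ (fun k => cc d w v k * tt d u i j ^ k)) by (intros; apply rho_term_eq).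
    unfold e. destruct (Nat.eqb i j); ring. }
  destruct (fsum_Series d a) as [H1 H2]. intros i _. apply Hinner.
  assert (Hext : forall k, fsum d (fun i => a i k) = cc d w v k * Qs d u k).
  { intros k. unfold a, Qs. rewrite <- fsum_scal. apply fsum_ext. intros i _.
    rewrite <- fsum_scal. apply fsum_ext. intros j _. ring. }
  split.
  - eapply ex_series_ext; [exact Hext|exact H1].
  - unfold rho. f_equal. rewrite <- (Series_ext _ _ Hext), <- H2.
    apply fsum_ext. intros i _. apply Hinner.
Qed.

Lemma unit_dot d u i : unit_ensemble d u -> (i < d)%nat -> dot d (u i) (u i) = 1.
Proof.
  intros Hu Hi. pose proof (Hu i Hi) as H. unfold norm2 in H.
  rewrite <- (pow2_sqrt (dot d (u i) (u i))) by apply dot_nonneg. rewrite H. ring.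
Qed.

Lemma dot_sym d x y : dot d x y = dot d y x.
Proof. unfold dot. apply fsum_ext. intros; ring. Qed.

Lemma dot_vadd d x y : dot d (vadd x y) (vadd x y) = dot d x x + 2 * dot d x y + dot d y y.
Proof.
  unfold dot, vadd. rewrite <- fsum_scal, <- !fsum_plus. apply fsum_ext. intros; ring.
Qed.

Lemma tt_eq d u i j : unit_ensemble d u -> (i < d)%nat -> (j < d)%nat ->
  tt d u i j = 2 + 2 * dot d (u i) (u j).
Proof.
  intros Hu Hi Hj. unfold tt. rewrite dot_vadd, !unit_dot by assumption. ring.
Qed.

Lemma sum_e_lin n i al be h : (i < n)%nat ->
  fsum n (fun j => e i j * (al + be * h j)) = INR n * al + be * fsum n h - al - be * h i.
Proof.
  intros Hi. rewrite fsum_e by exact Hi. rewrite fsum_plus, fsum_const, fsum_scal. ring.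
Qed.

Lemma gram_nonneg d u : 0 <= fsum d (fun i => fsum d (fun j => dot d (u i) (u j))).
Proof.
  unfold dot.
  rewrite (fsum_ext d _ (fun i => fsum d (fun k => u i k * fsum d (fun j => u j k)))).
  2: { intros i _. rewrite fsum_comm. apply fsum_ext. intros k _. rewrite <- fsum_scal. reflexivity. }
  rewrite fsum_comm.
  rewrite (fsum_ext d _ (fun k => fsum d (fun j => u j k) * fsum d (fun j => u j k))).
  2: { intros k _. rewrite <- fsum_scal. apply fsum_ext. intros; ring. }
  rewrite <- (Rmult_0_r (INR d)), <- fsum_const. apply fsum_le. intros. nra.
Qed.

Definition t0 d := 2 * (INR d - 2) / (INR d - 1).

Lemma Q_lower d u k : (2 <= d)%nat -> unit_ensemble d u ->
  INR d * (INR d - 1) * t0 d ^ k <= Qs d u k.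
Proof.
  intros Hd Hu.
  assert (HD : 2 <= INR d) by (replace 2 with (INR 2) by (simpl; ring); apply le_INR; lia).
  assert (Ht0 : 0 <= t0 d) by (unfold t0; apply Rmult_le_pos; [lra| apply Rlt_le, Rinv_0_lt_compat; lra]).
  set (K := INR k * t0 d ^ (pred k)).
  assert (HK : 0 <= K) by (apply Rmult_le_pos; [apply pos_INR| apply pow_le; lra]).
  set (al := t0 d ^ k + K * (2 - t0 d)). set (be := 2 * K).
  apply Rle_trans with (fsum d (fun i => fsum d (fun j => e i j * (al + be * dot d (u i) (u j))))).
  - rewrite (fsum_ext d _ (fun i => (INR d * al - al - be) + be * fsum d (fun j => dot d (u i) (u j)))).
    2: { intros i Hi. rewrite sum_e_lin by exact Hi. rewrite unit_dot by assumption. ring. }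
    rewrite fsum_plus, fsum_const, fsum_scal.
    pose proof (gram_nonneg d u).
    assert (0 <= be * fsum d (fun i => fsum d (fun j => dot d (u i) (u j)))).
    { apply Rmult_le_pos; [unfold be; lra| assumption]. }
    assert (E : INR d * (INR d * al - al - be) = INR d * (INR d - 1) * t0 d ^ k).
    { unfold al, be, t0. field. lra. }
    lra.
  - apply fsum_le. intros i Hi. apply fsum_le. intros j Hj.
    assert (He : 0 <= e i j) by (unfold e; destruct (Nat.eqb i j); lra).
    apply Rmult_le_compat_l. exact He.
    pose proof (tangent k (tt d u i j) (t0 d) (dot_nonneg _ _) Ht0).
    rewrite tt_eq in H at 1 by assumption. fold K in H. unfold al, be. lra.
Qed.

Lemma Q_simplex d s k : (2 <= d)%nat -> simplex_ensemble d s ->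
  Qs d s k = INR d * (INR d - 1) * t0 d ^ k.
Proof.
  intros Hd [Hu Hs].
  assert (HD : 2 <= INR d) by (replace 2 with (INR 2) by (simpl; ring); apply le_INR; lia).
  unfold Qs.
  rewrite (fsum_ext d _ (fun i => fsum d (fun j => e i j * (t0 d ^ k + 0 * 0)))).
  2: { intros i Hi. apply fsum_ext. intros j Hj. unfold e. destruct (Nat.eqb_spec i j). ring.
       rewrite tt_eq, Hs by assumption. replace (2 + 2 * (-1 / (INR d - 1))) with (t0 d) by (unfold t0; field; lra). ring. }
  rewrite (fsum_ext d _ (fun i => INR d * t0 d ^ k - t0 d ^ k)).
  2: { intros i Hi. rewrite (sum_e_lin d i (t0 d ^ k) 0 (fun _ => 0)) by exact Hi. ring. }
  rewrite (fsum_ext d _ (fun i => (INR d - 1) * t0 d ^ k)) by (intros; ring).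
  rewrite fsum_const. ring.
Qed.

Theorem lemmaA1 (d : nat) (w v : R) :
  (2 <= d)%nat -> 0 < w -> 0 <= v ->
  (exists s, simplex_ensemble d s) /\
  (forall s u : nat -> nat -> R,
     simplex_ensemble d s -> unit_ensemble d u ->
     rho d w v s <= rho d w v u).
Proof.
  intros Hd Hw Hv. split. now apply simplex_exists.
  intros s u Hs Hu.
  assert (HD : 2 <= INR d) by (replace 2 with (INR 2) by (simpl; ring); apply le_INR; lia).
  destruct (rho_repr d w v s Hd) as [_ Es]. destruct (rho_repr d w v u Hd) as [Xu Eu].
  rewrite Es, Eu. apply Rmult_le_compat_l.
  - apply Rmult_le_pos. apply Rlt_le.
    apply Rlt_le_trans with (exp (-2)). apply exp_pos. apply Gamma_lb. lra.
    apply Rlt_le, Rinv_0_lt_compat. nra.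
  - apply Series_le; [|exact Xu]. intros k. pose proof (cc_nonneg d w v k Hd).
    rewrite Q_simplex by assumption. pose proof (Q_lower d u k Hd Hu).
    assert (0 <= INR d * (INR d - 1) * t0 d ^ k).
    { apply Rmult_le_pos. nra. apply pow_le. unfold t0. apply Rmult_le_pos; [lra| apply Rlt_le, Rinv_0_lt_compat; lra]. }
    split. apply Rmult_le_pos; assumption. apply Rmult_le_compat_l; assumption.
Qed.
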